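(* Let $S$ be a connected shape in the triangular grid $G$ and let $h$ be a hole point of $S$. Then there exist points $v_1, v_2 \in S$ such that $h$ lies on a shortest path (in $G$) between $v_1$ and $v_2$.
   Context: The triangular grid $G$ is the infinite graph whose vertices (''points'') are the points of the regular triangular lattice in the plane, two points being adjacent iff they are at unit distance; every point has exactly six neighbors. A shape is a finite set of points of $G$, identified with the subgraph of $G$ it induces. A connected shape $S$ partitions the plane into faces (regions bounded by its points and edges), exactly one of which is unbounded (the outer face). A bounded face containing at least one grid point not in $S$ is a hole of $S$; the grid points lying in holes of $S$ are called hole points of $S$. *)

(* Defs.v *)
From Stdlib Require Import Reals.
From HB Require Import structures.
From mathcomp Require Import all_boot all_order all_algebra.
From mathcomp Require Import all_classical all_reals all_analysis.
From mathcomp Require Import Rstruct Rstruct_topology.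

Set Implicit Arguments. Unset Strict Implicit. Unset Printing Implicit Defensive.
Import Order.TTheory GRing.Theory Num.Theory.
Local Open Scope classical_set_scope.
Local Open Scope ring_scope.

(* Points of the triangular grid G in axial coordinates: (a, b) : int * int
   denotes the lattice point  a * (1, 0) + b * (1/2, sqrt 3 / 2)  of the plane. *)
Definition gpt := (int * int)%type.

Definition emb (p : gpt) : R * R :=
  ((p.1)%:~R + (p.2)%:~R / 2, Num.sqrt (3 : R) / 2 * (p.2)%:~R).

Definition gadj (p q : gpt) : bool :=
  let d : int * int := (q.1 - p.1, q.2 - p.2) in
  d \in ([:: (1, 0); (0, 1); (-1, 1); (-1, 0); (0, -1); (1, -1)] : seq (int * int)).

(* A walk in G from u along the sequence s (ending at last u s); its length is size s. *)
Definition gwalk (u : gpt) (s : seq gpt) (v : gpt) : Prop :=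
  path gadj u s /\ last u s = v.

Definition on_shortest_path (u v h : gpt) : Prop :=
  exists s, [/\ gwalk u s v, h \in u :: s &
    forall s', gwalk u s' v -> (size s <= size s')%N].

Definition connected_shape (S : set gpt) : Prop :=
  finite_set S /\
  forall u v, S u -> S v ->
    exists s, gwalk u s v /\ (forall x, x \in s -> S x).

Definition drawing (S : set gpt) : set (R * R) :=
  [set z | exists p, S p /\ z = emb p] `|`
  [set z | exists p q, [/\ S p, S q, gadj p q &
     exists t : R, [/\ 0 <= t, t <= 1 &
       z = ((1 - t) * (emb p).1 + t * (emb q).1,
            (1 - t) * (emb p).2 + t * (emb q).2)]]].

Definition face (S : set gpt) (F : set (R * R)) : Prop :=
  exists x, (~` drawing S) x /\ F = connected_component (~` drawing S) x.

Definition bounded_plane (F : set (R * R)) : Prop :=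
  exists M : R, forall z, F z -> `|z.1| <= M /\ `|z.2| <= M.

Definition hole (S : set gpt) (F : set (R * R)) : Prop :=
  [/\ face S F, bounded_plane F & exists g, ~ S g /\ F (emb g)].

Definition hole_point (S : set gpt) (h : gpt) : Prop :=
  exists F, hole S F /\ F (emb h).

(* Main.v *)
From Stdlib Require Import Reals.
Require Import Defs.
From mathcomp Require Import all_boot all_order all_algebra.
From mathcomp Require Import all_classical all_reals all_analysis.
From mathcomp Require Import Rstruct Rstruct_topology.
From mathcomp Require Import zify ring lra.
Import Order.TTheory GRing.Theory Num.Theory.
Local Open Scope classical_set_scope.
Local Open Scope ring_scope.
Lemma cf (a b c : R) : continuous (fun s : R => (a + c * s, b) : R * R).
move=> s. 
have h0 : (fun s : R => c * s) @ s --> c * s.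
  exact: cvgMr.
have h1 : (fun s : R => a + c * s) @ s --> a + c * s.
  have := @cvgD R R^o _ (nbhs s) _ (fun=> a) (fun s => c*s) a (c*s) (cvg_cst a) h0.
  exact.

have h2 : (fun s : R => b) @ s --> b by exact: cvg_cst.
exact: (cvg_pair h1 h2).
Qed.

Lemma ray_comp (A : set (R * R)) (x0 : R * R) (c : R) :
  (forall t : R, 0 <= t -> A (x0.1 + c * t, x0.2)) ->
  forall t : R, 0 <= t -> connected_component A x0 (x0.1 + c * t, x0.2).
Proof.
move=> HA t t0.
pose f := fun s : R => (x0.1 + c * s, x0.2).
have sub : f @` `[0, t] `<=` connected_component A x0.
  apply: connected_component_max.
  - exists 0; first by rewrite /= in_itv /= lexx t0.
    by rewrite /f mulr0 addr0 -surjective_pairing.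
  - move=> y [s]; rewrite /= in_itv /= => /andP[s0 _] <-; exact: HA.
  - apply: connected_continuous_connected; first exact: segment_connected.
    apply: continuous_subspaceT.
    exact: cf.
apply: sub; exists t => //; by rewrite /= in_itv /= lexx t0.
Qed.
Lemma gadjE (p q : gpt) : gadj p q ->
  let dx := q.1 - p.1 in let dy := q.2 - p.2 in
  ((dx == 1) && (dy == 0)) || ((dx == 0) && (dy == 1)) || ((dx == -1) && (dy == 1))
  || ((dx == -1) && (dy == 0)) || ((dx == 0) && (dy == -1)) || ((dx == 1) && (dy == -1)).
Proof. by rewrite /gadj !inE !xpair_eqE !orbA. Qed.

Lemma gadj_row (p q : gpt) : gadj p q ->
  (q.2 = p.2 /\ (q.1 = p.1 + 1 \/ q.1 = p.1 - 1)) \/ (q.2 = p.2 + 1 \/ q.2 = p.2 - 1).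
Proof. move/gadjE=> /=; lia. Qed.

Lemma gadj_col (p q : gpt) : gadj p q -> (`|q.1 - p.1| <= 1)%R.
Proof. move/gadjE=> /=; lia. Qed.

Lemma sq3_gt0 : 0 < Num.sqrt (3 : R) / 2.
Proof. apply: divr_gt0; last by lra. rewrite sqrtr_gt0; apply/RltP; exact: (IZR_lt 0 3). Qed.

Lemma row_eq (x : int) (b : int) : Num.sqrt (3 : R) / 2 * x%:~R = Num.sqrt 3 / 2 * b%:~R -> x = b.
Proof.
move=> /(mulfI (lt0r_neq0 sq3_gt0)) /eqP; rewrite eqr_int => /eqP //.
Qed.

Lemma drawing_row (S : set gpt) (b : int) (z : R * R) : drawing S z ->
  z.2 = Num.sqrt 3 / 2 * b%:~R ->
  exists p q, [/\ S p, S q, p.2 = b, q.2 = b & (emb p).1 <= z.1 <= (emb q).1].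
Proof.
case=> [[p [Sp ->]]|[p [q [Sp Sq pq [t [t0 t1 ->]]]]]] /=.
  move/row_eq=> pb; exists p, p; split => //; by rewrite lexx.
set s := Num.sqrt (3 : R) / 2.
have s0 := sq3_gt0.
case/gadj_row: pq => [[e2 e1]|e2].
  have e2r : (q.2)%:~R = (p.2)%:~R :> R by rewrite e2.
  move=> zb; have pb : p.2 = b by apply: row_eq; rewrite -zb e2r /s; ring.
  set xp := (emb p).1; set xq := (emb q).1.
  have [le|le] := lerP xp xq.
    have h : 0 <= t * (xq - xp) by rewrite mulr_ge0 // subr_ge0.
    have h' : 0 <= (1 - t) * (xq - xp) by apply: mulr_ge0; rewrite subr_ge0.
    exists p, q; split => //; first by rewrite e2.
    rewrite -/xp -/xq; apply/andP; split; rewrite -subr_ge0.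
      by have -> : (1 - t) * xp + t * xq - xp = t * (xq - xp) by ring.
    by have -> : xq - ((1 - t) * xp + t * xq) = (1 - t) * (xq - xp) by ring.
  have h : 0 <= t * (xp - xq) by rewrite mulr_ge0 // subr_ge0 ltW.
  have h' : 0 <= (1 - t) * (xp - xq) by apply: mulr_ge0; rewrite subr_ge0 // ltW.
  exists q, p; split => //; first by rewrite e2.
  rewrite -/xp -/xq; apply/andP; split; rewrite -subr_ge0.
    by have -> : (1 - t) * xp + t * xq - xq = (1 - t) * (xp - xq) by ring.
  by have -> : xp - ((1 - t) * xp + t * xq) = t * (xp - xq) by ring.
have key : forall (m : int), 0 <= m%:~R :> R -> m%:~R <= 1 :> R ->
    m%:~R = 0 :> R \/ m%:~R = 1 :> R.
  move=> m h1 h2; have : m = 0 \/ m = 1.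
    move: h1 h2; rewrite -[0]/(0%:~R) -[1]/(1%:~R) !ler_int; lia.
  by case=> ->; [left|right].
move=> zb.
have E : p.2%:~R + t * (q.2 - p.2)%:~R = b%:~R :> R.
  apply: (mulfI (lt0r_neq0 s0)) => /=; rewrite -zb intrB /s; ring.
have ht : t = 0 \/ t = 1.
  case: e2 => e; rewrite e in E.
    have e' : p.2 + 1 - p.2 = 1 by lia.
    rewrite e' mulr1 in E.
    have tm : t = (b - p.2)%:~R by rewrite intrB -E; ring.
    by have := key (b - p.2); rewrite -tm => /(_ t0 t1) [->|->]; [left|right].
  have e' : p.2 - 1 - p.2 = -1 by lia.
  rewrite e' mulrN1 in E.
  have tm : t = (p.2 - b)%:~R by rewrite intrB -E; ring.
  by have := key (p.2 - b); rewrite -tm => /(_ t0 t1) [->|->]; [left|right].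
case: ht => te; subst t.
  have pb : p.2 = b by apply: row_eq; rewrite -zb /s; ring.
  exists p, p; split => //; apply/andP; split; rewrite le_eqVlt; apply/orP; left; apply/eqP; ring.
have qb : q.2 = b by apply: row_eq; rewrite -zb /s; ring.
exists q, q; split => //; apply/andP; split; rewrite le_eqVlt; apply/orP; left; apply/eqP; ring.
Qed.
Lemma walk_bound (s : seq gpt) (u : gpt) : path gadj u s ->
  `|(last u s).1 - u.1| <= (size s)%:Z.
Proof.
elim: s u => [|x s IH] u /=; first by rewrite subrr.
case/andP=> /gadjE /= ux /IH; lia.
Qed.

Lemma straight (b : int) (n : nat) : forall a : int, exists s,
  [/\ path gadj (a, b) s, last (a, b) s = (a + n%:Z, b), size s = n &
      forall m : nat, (m <= n)%N -> (a + m%:Z, b) \in (a, b) :: s].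
Proof.
elim: n => [|n IH] a.
  exists [::]; split => //=; first by rewrite addr0.
  by move=> m; rewrite leqn0 => /eqP ->; rewrite addr0 mem_head.
have [s [ps ls ss ms]] := IH (a + 1).
exists ((a + 1, b) :: s); split => /=.
- rewrite ps andbT /gadj /= !inE; apply/orP; left; apply/eqP; congr pair; ring.
- rewrite ls; congr pair; lia.
- by rewrite ss.
- case=> [|m] lm; first by rewrite addr0 mem_head.
  rewrite in_cons; apply/orP; right.
  have -> : a + m.+1%:Z = a + 1 + m%:Z by lia.
  exact: ms.
Qed.

Lemma ray_side (S : set gpt) (h : gpt) (c : R) :
  (c = 1 \/ c = -1) -> ~ drawing S (emb h) ->
  (~ exists p, [/\ S p, p.2 = h.2 & c * (h.1)%:~R <= c * (p.1)%:~R]) ->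
  forall t : R, 0 <= t -> (~` drawing S) ((emb h).1 + c * t, (emb h).2).
Proof.
move=> hc nh N t t0 D.
have [p [q [Sp Sq pb qb /andP[l1 l2]]]] := @drawing_row S h.2 _ D erefl.
move: l1 l2; rewrite /emb /= pb qb => l1 l2.
case: hc => ec; subst c.
  apply: N; exists q; split => //.
  rewrite !mul1r -[(q.1)%:~R]/(q.1%:~R : R); lra.
apply: N; exists p; split => //.
rewrite !mulN1r lerN2; lra.
Qed.

Lemma side_exists (S : set gpt) (h : gpt) (c : R) (F : set (R * R)) (x : R * R) :
  (c = 1 \/ c = -1) -> F = connected_component (~` drawing S) x -> bounded_plane F ->
  F (emb h) ->
  exists p, [/\ S p, p.2 = h.2 & c * (h.1)%:~R <= c * (p.1)%:~R].
Proof.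
move=> hc EF [M HM] Fh.
apply: contrapT => N.
set y := emb h.
have cy : connected_component (~` drawing S) x y by rewrite -EF.
have Ay : (~` drawing S) y by apply: (connected_component_sub cy).
have EF' : F = connected_component (~` drawing S) y by rewrite EF; exact: same_connected_component.
pose t := `|M| + `|y.1| + 1.
have t0 : 0 <= t by rewrite /t; apply: addr_ge0 => //; apply: addr_ge0.
have := @ray_comp _ _ _ (@ray_side S h c hc Ay N) t t0.
rewrite -EF' => /HM [/= H _].
case: hc => ec; subst c.
  have := ler_norm (y.1 + 1 * t); have := ler_norm M; have := ler_norm (- y.1).
  rewrite normrN /t; lra.
have := ler_norm (- (y.1 + -1 * t)); rewrite normrN.
have := ler_norm M; have := ler_norm y.1; rewrite /t; lra.
Qed.

Theorem proposition2p1 (S : set gpt) (h : gpt) :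
  connected_shape S -> hole_point S h ->
  exists v1 v2, [/\ S v1, S v2 & on_shortest_path v1 v2 h].
Proof.
move=> _ [F [[[x [_ EF]] bF _] Fh]].
have nSh : ~ S h.
  move=> Sh.
  have cy : connected_component (~` drawing S) x (emb h) by rewrite -EF.
  by apply: (connected_component_sub cy); left; exists h.
have [q [Sq q2 lq]] := @side_exists S h 1 F x (or_introl erefl) EF bF Fh.
have [p [Sp p2 lp]] := @side_exists S h (-1) F x (or_intror erefl) EF bF Fh.
rewrite !mul1r ler_int in lq.
rewrite !mulN1r lerN2 ler_int in lp.
have lq' : h.1 < q.1.
  rewrite lt_neqAle lq andbT; apply/eqP => e; apply: nSh.
  by have -> : h = q by apply: injective_projections => //=; rewrite q2.
have lp' : p.1 < h.1.
  rewrite lt_neqAle lp andbT; apply/eqP => e; apply: nSh.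
  by have -> : h = p by apply: injective_projections => //=; rewrite p2.
exists p, q; split => //.
pose n := `|q.1 - p.1|%N.
have [s [ps ls ss ms]] := straight h.2 n p.1.
have Ep : p = (p.1, h.2) by rewrite -p2 -surjective_pairing.
have Eq : q = (p.1 + n%:Z, h.2).
  rewrite -q2 [q in LHS]surjective_pairing; congr pair; rewrite /n; lia.
exists s; split.
- by rewrite /gwalk Ep ls -Eq.
- rewrite Ep.
  have -> : h = (p.1 + (`|h.1 - p.1|%N)%:Z, h.2).
    rewrite [h in LHS]surjective_pairing; congr pair; lia.
  apply: ms; rewrite /n; lia.
- move=> s' [ps' ls'].
  have := @walk_bound _ _ ps'; rewrite ls' ss /n; lia.
Qed.
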